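(* Let $\mathcal M=(a_{i,j})_{i,j\in[n]}$ be a real matrix with $0\le a_{i,j}\le 1$ for all $i,j\in[n]$ such that each row sum $s_i=\sum_{j\in[n]}a_{i,j}$ and each column sum $t_j=\sum_{i\in[n]}a_{i,j}$ is a (nonnegative) integer. Let $X=\sum_{i\in[n]}s_i$. Then there exists a matrix $\mathcal N=(b_{i,j})_{i,j\in[n]}$ with $b_{i,j}\in\{0,1\}$ for all $i,j$, $\sum_{j\in[n]}b_{i,j}=s_i$ for all $i\in[n]$, $\sum_{i\in[n]}b_{i,j}=t_j$ for all $j\in[n]$, and $$\sum_{i\in[n]}\sum_{j\in[n]}a_{i,j}\,b_{i,j}\ \ge\ \frac{X^2}{n^2}.$$
   Context: $[n]=\{1,\dots,n\}$ for a positive integer $n$. *)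

(* Defs.v *)
From mathcomp Require Import all_boot all_order all_algebra.
From mathcomp Require Import reals.

(* Main.v *)
Require Import Defs.
From mathcomp Require Import all_boot all_order all_algebra.
From mathcomp Require Import reals.
From mathcomp Require Import zify ring lra.
Import Order.TTheory GRing.Theory Num.Theory.
Local Open Scope ring_scope.

Lemma kernel_ex (R : fieldType) (S T : finType) (a : S -> T -> R) :
  (#|S| < #|T|)%N -> exists x : T -> R, (exists t, x t != 0) /\
    forall s, \sum_t a s t * x t = 0.
Proof.
move=> hST.
pose M : 'M[R]_(#|T|, #|S|) := \matrix_(k, l) a (enum_val l) (enum_val k).
have hk : kermx M != 0.
  rewrite -mxrank_eq0 mxrank_ker; have := rank_leq_col M; lia.
case/boolP: [exists i, exists j, kermx M i j != 0] => [/existsP[i /existsP[j hij]] | H]; last first.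
  move: H; rewrite negb_exists => /forallP H'; case/negP: hk; apply/eqP/matrixP => i j.
  by move: (H' i); rewrite negb_exists => /forallP /(_ j); rewrite negbK => /eqP ->; rewrite mxE.
pose u := row i (kermx M).
have hu : u *m M = 0 by rewrite -row_mul mulmx_ker row0.
exists (fun t => u 0 (enum_rank t)); split.
  by exists (enum_val j); rewrite enum_valK mxE.
move=> s; transitivity ((u *m M) 0 (enum_rank s)); last by rewrite hu mxE.
rewrite mxE (reindex (@enum_val T predT)) /=; last by exists enum_rank => x _; [exact: enum_valK | exact: enum_rankK].
by apply: eq_bigr => k _; rewrite enum_valK /M !mxE enum_rankK mulrC.
Qed.
Lemma cs_ineq (R : realFieldType) (T : finType) (f : T -> R) :
  (\sum_t f t) ^+ 2 <= #|T|%:R * \sum_t f t ^+ 2.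
Proof.
have H : 0 <= \sum_t \sum_u (f t - f u) ^+ 2.
  by apply: sumr_ge0 => t _; apply: sumr_ge0 => u _; apply: sqr_ge0.
have E : \sum_t \sum_u (f t - f u) ^+ 2 =
   (#|T|%:R * \sum_t f t ^+ 2) *+ 2 - ((\sum_t f t) ^+ 2) *+ 2.
  have E1 : forall t u, (f t - f u) ^+ 2 = f t ^+ 2 + f u ^+ 2 - (f t * f u) *+ 2.
    by move=> t u; ring.
  under eq_bigr => t _ do under eq_bigr => u _ do rewrite E1.
  under eq_bigr => t _ do under eq_bigr => u _ do rewrite -mulrnAl.
  under eq_bigr => t _ do rewrite big_split /= big_split /= sumrN sumr_const -mulr_sumr.
  rewrite big_split /= big_split /= sumrN sumr_const -mulr_suml !sumrMnl -mulr_natl.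
  rewrite (_ : #|xpredT| = #|T|) //.
  move: (\sum_i f i ^+ 2) (\sum_i f i) => a b; rewrite -mulr_natl; ring.
lra.
Qed.
Lemma count2 (T I : finType) (F : {set T}) (p : T -> I) :
  (forall c, c \in F -> exists2 c', c' \in F & (c' != c) && (p c' == p c)) ->
  (2 * #|p @: F| <= #|F|)%N.
Proof.
move=> H.
rewrite -[#|F|]sum1_card (partition_big p (mem (p @: F))) //=; last first.
  by move=> c cF; apply: imset_f.
rewrite mulnC -sum_nat_const; apply: leq_sum => x /imsetP[c cF ->].
have [c' c'F /andP[nc pc]] := H c cF.
rewrite (bigD1 c) /=; last by rewrite cF eqxx.
rewrite (bigD1 c') /=; last by rewrite c'F pc nc.
lia.
Qed.

Lemma natsum (R : realDomainType) (I : finType) (P : pred I) (x : I -> R) :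
  (forall k, P k -> x k = 0 \/ x k = 1) -> exists m : nat, \sum_(k | P k) x k = m%:R.
Proof.
move=> H; apply: (big_ind (fun y => exists m : nat, y = m%:R)).
- by exists 0%N.
- by move=> _ _ [a ->] [b ->]; exists (a + b)%N; rewrite natrD.
- by move=> k /H [] ->; [exists 0%N | exists 1%N].
Qed.

Lemma nofrac (R : realDomainType) (k m : nat) (a : R) :
  k%:R = m%:R + a -> 0 < a < 1 -> False.
Proof.
move=> E /andP[a0 a1]; have ea : a = k%:R - m%:R by rewrite E; ring.
case: (leqP k m) => hkm.
  by move: a0; rewrite ea subr_gt0 ltr_nat; lia.
have : (m + 1)%:R <= k%:R :> R by rewrite ler_nat; lia.
by rewrite natrD; lra.
Qed.

Lemma two_in_row (R : realDomainType) (n : nat) (C : 'M[R]_n) i j :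
  (forall i j, 0 <= C i j <= 1) ->
  (exists k : nat, \sum_(j < n) C i j = k%:R) ->
  0 < C i j < 1 -> exists2 j', j' != j & 0 < C i j' < 1.
Proof.
move=> hb [k hk] hf.
case/boolP: [exists j', (j' != j) && (0 < C i j' < 1)] => [/existsP[j' /andP[? ?]]|H].
  by exists j'.
exfalso.
have [m hm] : exists m : nat, \sum_(j' | j' != j) C i j' = m%:R.
  apply: natsum => j' nj; move: H; rewrite negb_exists => /forallP /(_ j').
  rewrite nj /= => hn; have /andP[h0 h1] := hb i j'.
  move: h0 h1 hn; rewrite !le_eqVlt => /orP[/eqP<-|->] /orP[/eqP->|->] //=; by [left|right].
move: hk; rewrite (bigD1 j) //= hm addrC => hk.
exact: nofrac (esym hk) hf.
Qed.
Lemma exmin (R : realType) (T : finType) (P : pred T) (f : T -> R) t0 :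
  P t0 -> exists t, P t /\ forall u, P u -> f t <= f u.
Proof.
move=> Pt0; case: (@arg_minP _ R T t0 P f Pt0) => t Pt H.
by exists t; split => // u /H.
Qed.

Definition fr {R : realType} {n} (C : 'M[R]_n) : {set 'I_n * 'I_n} :=
  [set c | 0 < C c.1 c.2 < 1].

Lemma perturb (R : realType) n (A C E : 'M[R]_n) :
  (forall i j, 0 <= C i j <= 1) ->
  (forall i j, E i j != 0 -> 0 < C i j < 1) ->
  (forall i, \sum_j E i j = 0) -> (forall j, \sum_i E i j = 0) ->
  (exists i j, E i j != 0) ->
  0 <= \sum_i \sum_j A i j * E i j ->
  exists C' : 'M[R]_n, (forall i j, 0 <= C' i j <= 1) /\
    (forall i, \sum_j C' i j = \sum_j C i j) /\ (forall j, \sum_i C' i j = \sum_i C i j) /\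
    \sum_i \sum_j A i j * C i j <= \sum_i \sum_j A i j * C' i j /\
    fr C' \proper fr C.
Proof.
move=> hb hs hr hc [i0 [j0 hE0]] hA.
pose r (c : 'I_n * 'I_n) := if 0 < E c.1 c.2 then (1 - C c.1 c.2) / E c.1 c.2
   else C c.1 c.2 / (- E c.1 c.2).
have [cs [Pcs Hmin]] := @exmin R _ (fun c => E c.1 c.2 != 0) r (i0, j0) hE0.
pose eps := r cs.
have rpos : forall c, E c.1 c.2 != 0 -> 0 < r c.
  move=> c hc0; have /andP[h0 h1] := hs _ _ hc0; rewrite /r; case: ifP => hp.
    by apply: divr_gt0; lra.
  have hn : E c.1 c.2 < 0 by rewrite lt_neqAle hc0 /= leNgt hp.
  by apply: divr_gt0 => //; lra.
have epos : 0 < eps by exact: rpos.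
have key : forall i j, 0 <= C i j + eps * E i j <= 1.
  move=> i j; have /andP[c0 c1] := hb i j.
  case: (ltgtP (E i j) 0) => he.
  - have := Hmin (i, j) (negbT (lt_eqF he)); rewrite -/eps [r (i, j)]/r /= (_ : (0 < E i j) = false); last by apply/negbTE; rewrite -leNgt ltW.
    rewrite ler_pdivlMr; last by lra.
    move=> h; apply/andP; split; nra.
  - have := Hmin (i, j) (negbT (gt_eqF he)); rewrite -/eps [r (i, j)]/r /= he.
    rewrite ler_pdivlMr // => h; apply/andP; split; nra.
  - by rewrite he mulr0 addr0; apply/andP.
have kcs : C cs.1 cs.2 + eps * E cs.1 cs.2 = 0 \/ C cs.1 cs.2 + eps * E cs.1 cs.2 = 1.
  by rewrite /eps /r; case: ifP => _; [right | left]; field; rewrite ?oppr_eq0; exact: Pcs.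
exists (\matrix_(i, j) (C i j + eps * E i j)); split; [|split; [|split; [|split]]].
- by move=> i j; rewrite mxE.
- move=> i; under eq_bigr => j _ do rewrite mxE.
  by rewrite big_split /= -mulr_sumr hr mulr0 addr0.
- move=> j; under eq_bigr => i _ do rewrite mxE.
  by rewrite big_split /= -mulr_sumr hc mulr0 addr0.
- have -> : \sum_i \sum_j A i j * (\matrix_(i, j) (C i j + eps * E i j)) i j =
     \sum_i \sum_j A i j * C i j + eps * \sum_i \sum_j A i j * E i j.
    rewrite mulr_sumr -big_split; apply: eq_bigr => i _.
    rewrite mulr_sumr -big_split; apply: eq_bigr => j _; rewrite mxE; rewrite /=; ring.
  have := mulr_ge0 (ltW epos) hA; lra.
- apply/properP; split.
    apply/subsetP => c; rewrite !inE mxE => hc'.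
    case: (eqVneq (E c.1 c.2) 0) => he; first by rewrite he mulr0 addr0 in hc'.
    exact: hs.
  exists cs; first by rewrite inE; exact: hs.
  by rewrite inE mxE; case: kcs => ->; rewrite ?ltxx ?andbF.
Qed.
Lemma sumT (R : realType) n (g : 'I_n * 'I_n -> R) :
  \sum_t g t = \sum_i \sum_j g (i, j).
Proof. by rewrite pair_bigA; apply: eq_bigr => -[]. Qed.

Lemma sum_delta (R : realType) (T : finType) (c : T) (x : T -> R) :
  \sum_t (t == c)%:R * x t = x c.
Proof.
rewrite (bigD1 c) //= eqxx mul1r big1 ?addr0 // => t /negbTE ->.
by rewrite mul0r.
Qed.

Lemma kernel_step (R : realType) n (C : 'M[R]_n) :
  (forall i j, 0 <= C i j <= 1) ->
  (forall i, exists k : nat, \sum_(j < n) C i j = k%:R) ->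
  (forall j, exists k : nat, \sum_(i < n) C i j = k%:R) ->
  fr C != set0 ->
  exists E : 'M[R]_n, (forall i j, E i j != 0 -> 0 < C i j < 1) /\
    (forall i, \sum_j E i j = 0) /\ (forall j, \sum_i E i j = 0) /\
    (exists i j, E i j != 0).
Proof.
move=> hb hr hc /set0Pn [c0 c0F].
set F := fr C.
have hrow : forall c, c \in F -> exists2 c', c' \in F & (c' != c) && (c'.1 == c.1).
  move=> [i j]; rewrite inE /= => hf.
  have [j' nj hj'] := @two_in_row _ _ C i j hb (hr i) hf.
  exists (i, j'); first by rewrite inE.
  by rewrite /= eqxx andbT xpair_eqE negb_and nj orbT.
have hcol : forall c, c \in F -> exists2 c', c' \in F & (c' != c) && (c'.2 == c.2).
  move=> [i j]; rewrite inE /= => hf.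
  have hbT : forall i j, 0 <= C^T i j <= 1 by move=> ? ?; rewrite mxE.
  have hrT : exists k : nat, \sum_(i' < n) C^T j i' = k%:R.
    have [k hk] := hc j; exists k; rewrite -hk; apply: eq_bigr => ? _; rewrite mxE.
    by [].
  have hfT : 0 < C^T j i < 1 by rewrite mxE.
  have [i' ni hi'] := @two_in_row _ _ C^T j i hbT hrT hfT.
  exists (i', j); first by rewrite inE /=; move: hi'; rewrite mxE.
  by rewrite /= eqxx andbT xpair_eqE negb_and ni.
have cr := @count2 _ _ F _ hrow.
have cc := @count2 _ _ F _ hcol.
pose rows := (fun c : 'I_n * 'I_n => c.1) @: F.
pose cols := (fun c : 'I_n * 'I_n => c.2) @: F.
pose j0 := c0.2.
have j0c : j0 \in cols by apply: imset_f.
pose S : finType := ({c : 'I_n * 'I_n | c \notin F} + ({i : 'I_n | i \in rows} +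
            {j : 'I_n | (j != j0) && (j \in cols)}))%type.
have cardS : (#|S| < #|{: 'I_n * 'I_n}|)%N.
  rewrite !card_sum !card_sig.
  have e1 : #|[pred c : 'I_n * 'I_n | c \notin F]| = #|~: F|.
    by apply: eq_card => c; rewrite in_setC.
  have e2 : #|[pred j : 'I_n | (j != j0) && (j \in cols)]| = (#|cols| - 1)%N.
    rewrite (cardD1 j0 cols) j0c /= add1n subSS subn0; by apply: eq_card.
  have e3 := cardsC F.
  have e0 : #|[pred x in rows]| = #|rows| by apply: eq_card.
  have c1 : (0 < #|cols|)%N by apply/card_gt0P; exists j0.
  rewrite e0 e1 e2; move: cr cc e3 c1; rewrite -/rows -/cols; rewrite !card_prod; lia.
pose a (s : S) (t : 'I_n * 'I_n) : R :=
  match s with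
  | inl c => (t == val c)%:R
  | inr (inl i) => (t.1 == val i)%:R
  | inr (inr j) => (t.2 == val j)%:R
  end.
have [x [[t xt] hx]] := @kernel_ex _ _ _ a cardS.
have x0 : forall c, c \notin F -> x c = 0.
  by move=> c hcF; have := hx (inl (exist _ c hcF)); rewrite /= sum_delta.
have xrow : forall i, \sum_j x (i, j) = 0.
  move=> i; case/boolP: (i \in rows) => hi.
    have := hx (inr (inl (exist _ i hi))); rewrite /= sumT => H0; apply: (etrans _ H0).
    rewrite [RHS](bigD1 i) //= [X in _ + X]big1 => [|i' ni]; last first.
      by apply: big1 => j _; rewrite (negbTE ni) mul0r.
    by rewrite addr0; apply: eq_bigr => j _; rewrite eqxx mul1r.
  apply: big1 => j _; apply: x0; apply: contra hi => hij.
  by apply/imsetP; exists (i, j).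
have xcol : forall j, j != j0 -> \sum_i x (i, j) = 0.
  move=> j nj; case/boolP: (j \in cols) => hj.
    have := hx (inr (inr (exist _ j (introT andP (conj nj hj))))).
    rewrite /= sumT exchange_big => H0; apply: (etrans _ H0).
    rewrite [RHS](bigD1 j) //= [X in _ + X]big1 => [|j' nj']; last first.
      by apply: big1 => i _; rewrite (negbTE nj') mul0r.
    by rewrite addr0; apply: eq_bigr => i _; rewrite eqxx mul1r.
  apply: big1 => i _; apply: x0; apply: contra hj => hij.
  by apply/imsetP; exists (i, j).
exists (\matrix_(i, j) x (i, j)); split; [|split; [|split]].
- move=> i j; rewrite mxE => hij.
  have : (i, j) \in F by apply: contraR hij => /x0 ->; rewrite eqxx.
  by rewrite inE.
- by move=> i; under eq_bigr => j _ do rewrite mxE; apply: xrow.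
- move=> j; under eq_bigr => i _ do rewrite mxE.
  case: (eqVneq j j0) => [->|nj]; last exact: xcol.
  have : \sum_j \sum_i x (i, j) = 0.
    by rewrite exchange_big; apply: big1 => i _; apply: xrow.
  rewrite (bigD1 j0) //= [X in _ + X]big1 ?addr0 // => j' nj'.
- by exists t.1, t.2; rewrite mxE -surjective_pairing.
Qed.
Definition feas {R : realType} {n} (A C : 'M[R]_n) :=
  [/\ (forall i j, 0 <= C i j <= 1),
      (forall i, \sum_j C i j = \sum_j A i j),
      (forall j, \sum_i C i j = \sum_i A i j) &
      \sum_i \sum_j A i j * A i j <= \sum_i \sum_j A i j * C i j].

Lemma main_ind (R : realType) n (A : 'M[R]_n) :
  (forall i, exists k : nat, \sum_(j < n) A i j = k%:R) ->
  (forall j, exists k : nat, \sum_(i < n) A i j = k%:R) ->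
  forall k (C : 'M[R]_n), (#|fr C| <= k)%N -> feas A C ->
  exists B, feas A B /\ fr B = set0.
Proof.
move=> hr hc; elim=> [|k IH] C hk hC.
  by exists C; split => //; apply/eqP; rewrite -cards_eq0; lia.
case/boolP: (fr C == set0) => [/eqP h0|hne]; first by exists C.
case: hC => hb hrC hcC hg.
have hr' : forall i, exists k : nat, \sum_(j < n) C i j = k%:R.
  by move=> i; rewrite hrC; apply: hr.
have hc' : forall j, exists k : nat, \sum_(i < n) C i j = k%:R.
  by move=> j; rewrite hcC; apply: hc.
have [E [hs [hrE [hcE [i0 [j0 hE0]]]]]] := @kernel_step _ _ C hb hr' hc' hne.
have [C' [hb' [hr2 [hc2 [hg2 hp]]]]] :
  exists C' : 'M[R]_n, (forall i j, 0 <= C' i j <= 1) /\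
    (forall i, \sum_j C' i j = \sum_j C i j) /\ (forall j, \sum_i C' i j = \sum_i C i j) /\
    \sum_i \sum_j A i j * C i j <= \sum_i \sum_j A i j * C' i j /\
    fr C' \proper fr C.
  case: (lerP 0 (\sum_i \sum_j A i j * E i j)) => hA.
    by apply: (@perturb _ _ A C E hb hs hrE hcE _ hA); exists i0, j0.
  apply: (@perturb _ _ A C (- E) hb).
  - by move=> i j; rewrite mxE oppr_eq0; apply: hs.
  - by move=> i; under eq_bigr => j _ do rewrite mxE; rewrite sumrN hrE oppr0.
  - by move=> j; under eq_bigr => i _ do rewrite mxE; rewrite sumrN hcE oppr0.
  - by exists i0, j0; rewrite mxE oppr_eq0.
  - have -> : \sum_i \sum_j A i j * (- E) i j = - \sum_i \sum_j A i j * E i j.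
      rewrite -sumrN; apply: eq_bigr => i _; rewrite -sumrN; apply: eq_bigr => j _.
      by rewrite mxE mulrN.
    lra.
apply: (IH C').
  have := proper_card hp; lia.
split => //; [move=> i; rewrite hr2 | move=> j; rewrite hc2 | lra]; by [].
Qed.
Theorem lemma4p1 (R : realType) (n : nat) (A : 'M[R]_n) :
  (forall i j, 0 <= A i j <= 1) ->
  (forall i, exists k : nat, \sum_(j < n) A i j = k%:R) ->
  (forall j, exists k : nat, \sum_(i < n) A i j = k%:R) ->
  exists B : 'M[R]_n,
    (forall i j, B i j = 0 \/ B i j = 1) /\
    (forall i, \sum_(j < n) B i j = \sum_(j < n) A i j) /\
    (forall j, \sum_(i < n) B i j = \sum_(i < n) A i j) /\
    (\sum_(i < n) \sum_(j < n) A i j) ^+ 2 / (n%:R ^+ 2)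
      <= \sum_(i < n) \sum_(j < n) A i j * B i j.
Proof.
move=> hb hr hc.
have [B [[hbB hrB hcB hgB] h0]] := @main_ind R n A hr hc _ A (leqnn _) (And4 hb (fun _ => erefl) (fun _ => erefl) (lexx _)).
exists B; split; [|split; [by []|split; [by []|]]].
  move=> i j; have /andP[b0 b1] := hbB i j.
  have : (i, j) \notin fr B by rewrite h0 inE.
  rewrite inE /= negb_and -!leNgt => /orP[h|h]; [left|right]; apply/eqP; rewrite eq_le; lra.
apply: le_trans hgB.
have hsq : 0 <= \sum_i \sum_j A i j * A i j.
  by apply: sumr_ge0 => i _; apply: sumr_ge0 => j _; rewrite -expr2; apply: sqr_ge0.
clear B hbB hrB hcB h0 hb hr hc.
case: n A hsq => [|m] A hsq.
  by rewrite expr0n /= invr0 mulr0.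
rewrite ler_pdivrMr; last by rewrite exprn_gt0 // ltr0n.
have := @cs_ineq _ _ (fun c : 'I_m.+1 * 'I_m.+1 => A c.1 c.2).
rewrite card_prod card_ord => h; rewrite !sumT /= in h.
have -> : \sum_i \sum_j A i j * A i j = \sum_i \sum_j A i j ^+ 2.
  by apply: eq_bigr => i _; apply: eq_bigr => j _; rewrite expr2.
by move: h; rewrite natrM -expr2 [X in _ <= X -> _]mulrC.
Qed.
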